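(* Let $(X,d)$ be a complete CAT(0) space and let $A,B\subseteq X$ be nonempty, closed and convex. Define $P:A\cup B\to A\cup B$ by $P(x)=P_B(x)$ if $x\in A$ and $P(x)=P_A(x)$ if $x\in B$. Then $P$ is a cyclic relatively nonexpansive mapping.
   Context: A CAT(0) space is a geodesic space in which every geodesic triangle satisfies $d(x,y)\le d_{\mathbb{E}^2}(\bar x,\bar y)$ for all points $x,y$ of the triangle and their comparison points $\bar x,\bar y$ in a Euclidean comparison triangle with the same side lengths. For nonempty closed convex $C$ in a complete CAT(0) space, $P_C(x)$ denotes the unique point of $C$ nearest to $x$ (metric projection). A mapping $T:A\cup B\to A\cup B$ is relatively nonexpansive if $d(Tx,Ty)\le d(x,y)$ for all $x\in A$, $y\in B$, and cyclic if $T(A)\subseteq B$ and $T(B)\subseteq A$. *)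

(* Defs.v *)
From Stdlib Require Import Reals List ClassicalEpsilon.
Import ListNotations.
Open Scope R_scope.

Section CAT0.
Variable X : Type.
Variable d : X -> X -> R.

Definition is_metric : Prop :=
  (forall x y, 0 <= d x y) /\
  (forall x y, d x y = 0 <-> x = y) /\
  (forall x y, d x y = d y x) /\
  (forall x y z, d x z <= d x y + d y z).

(* g : [0, d x y] -> X is a geodesic from x to y (values outside are irrelevant) *)
Definition geodesic (g : R -> X) (x y : X) : Prop :=
  g 0 = x /\ g (d x y) = y /\
  forall s t, 0 <= s <= d x y -> 0 <= t <= d x y -> d (g s) (g t) = Rabs (s - t).

Definition geodesic_space : Prop :=
  forall x y, exists g, geodesic g x y.

Definition euclid (p q : R * R) : R :=
  sqrt ((fst p - fst q) ^ 2 + (snd p - snd q) ^ 2).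

Definition lerp (u v : R * R) (r : R) : R * R :=
  (fst u + r * (fst v - fst u), snd u + r * (snd v - snd u)).

(* a side of a triangle: geodesic g of length a, with comparison endpoints ub vb *)
Definition side : Type := ((R -> X) * R * (R * R) * (R * R))%type.

(* CAT(0) inequality between points of two sides of a geodesic triangle
   and their comparison points *)
Definition side_pair_ok (S1 S2 : side) : Prop :=
  let '(g, a, u, v) := S1 in
  let '(h, b, w, z) := S2 in
  forall s t, 0 <= s <= a -> 0 <= t <= b ->
    d (g s) (h t) <= euclid (lerp u v (s / a)) (lerp w z (t / b)).

Definition CAT0_ineq : Prop :=
  forall (x y z : X) (g1 g2 g3 : R -> X),
    geodesic g1 x y -> geodesic g2 y z -> geodesic g3 z x ->
    forall xb yb zb : R * R,
      euclid xb yb = d x y -> euclid yb zb = d y z -> euclid zb xb = d z x ->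
      let Ss := [(g1, d x y, xb, yb); (g2, d y z, yb, zb); (g3, d z x, zb, xb)] in
      forall S1 S2, In S1 Ss -> In S2 Ss -> side_pair_ok S1 S2.

Definition complete : Prop :=
  forall u : nat -> X,
    (forall eps, 0 < eps -> exists N, forall m n, (N <= m)%nat -> (N <= n)%nat ->
        d (u m) (u n) < eps) ->
    exists l, forall eps, 0 < eps -> exists N, forall n, (N <= n)%nat -> d (u n) l < eps.

Definition complete_CAT0 : Prop :=
  is_metric /\ geodesic_space /\ CAT0_ineq /\ complete.

Definition nonempty (C : X -> Prop) : Prop := exists x, C x.

Definition closed (C : X -> Prop) : Prop :=
  forall (u : nat -> X) (l : X), (forall n, C (u n)) ->
    (forall eps, 0 < eps -> exists N, forall n, (N <= n)%nat -> d (u n) l < eps) ->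
    C l.

Definition convex (C : X -> Prop) : Prop :=
  forall x y g, C x -> C y -> geodesic g x y ->
    forall s, 0 <= s <= d x y -> C (g s).

Definition proj (C : X -> Prop) (x : X) : X :=
  epsilon (inhabits x) (fun p => C p /\ forall c, C c -> d x p <= d x c).

(* the map P on A ∪ B (defined arbitrarily, as P_A, outside A ∪ B) *)
Definition cycP (A B : X -> Prop) (x : X) : X :=
  if excluded_middle_informative (A x) then proj B x else proj A x.

Definition cyclic_map (A B : X -> Prop) (T : X -> X) : Prop :=
  (forall x, A x -> B (T x)) /\ (forall x, B x -> A (T x)).

Definition rel_nonexpansive (A B : X -> Prop) (T : X -> X) : Prop :=
  forall x y, A x -> B y -> d (T x) (T y) <= d x y.

End CAT0.

(* Main.v *)
Require Import Defs.
From Stdlib Require Import Reals Lra Psatz List ClassicalEpsilon Classical.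
Import ListNotations.
Open Scope R_scope.

Lemma tri_exists (a b c : R) : 0 < c -> 0 <= a -> 0 <= b ->
  a <= b + c -> b <= a + c -> c <= a + b ->
  exists p q, sqrt ((c - p)^2 + (0 - q)^2) = a /\ sqrt ((p - 0)^2 + (q - 0)^2) = b
    /\ p = (c*c + b*b - a*a)/(2*c) /\ p*p + q*q = b*b.
Proof.
  intros Hc Ha Hb H1 H2 H3.
  set (p := (c*c + b*b - a*a)/(2*c)).
  assert (Hp : 2*c*p = c*c+b*b-a*a) by (unfold p; field; lra).
  assert (Hq : 0 <= b*b - p*p).
  { assert (h: (2*c)*(2*c)*(b*b - p*p) = (2*b*c)^2 - (c*c+b*b-a*a)^2).
    { replace ((c*c+b*b-a*a)) with (2*c*p) by lra. ring. }
    assert (0 <= (2*b*c)^2 - (c*c+b*b-a*a)^2).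
    { replace ((2*b*c)^2 - (c*c+b*b-a*a)^2) with
        ((2*b*c - (c*c+b*b-a*a)) * (2*b*c + (c*c+b*b-a*a))) by ring.
      apply Rmult_le_pos.
      - replace (2*b*c - (c*c+b*b-a*a)) with ((a - (b - c))*(a + (b-c))) by ring.
        apply Rmult_le_pos; lra.
      - replace (2*b*c + (c*c+b*b-a*a)) with ((b+c-a)*(b+c+a)) by ring.
        apply Rmult_le_pos; lra. }
    assert (Hc2 : 0 < (2*c)*(2*c)) by nra.
    destruct (Rle_or_lt 0 (b*b - p*p)) as [?|Hn]; [assumption|].
    assert (0 < (2*c)*(2*c)*(-(b*b-p*p))) by (apply Rmult_lt_0_compat; lra).
    lra. }
  exists p, (sqrt (b*b - p*p)).
  assert (Hs : sqrt (b*b-p*p) * sqrt (b*b-p*p) = b*b - p*p) by (apply sqrt_sqrt; lra).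
  split; [|split; [|split]].
  - replace ((c - p)^2 + (0 - sqrt (b*b-p*p))^2) with (a*a).
    + apply sqrt_square; lra.
    + replace ((0 - sqrt (b*b-p*p))^2) with (sqrt (b*b-p*p) * sqrt (b*b-p*p)) by ring.
      rewrite Hs. replace ((c-p)^2) with (c*c - 2*c*p + p*p) by ring. rewrite Hp. ring.
  - replace ((p - 0)^2 + (sqrt (b*b-p*p) - 0)^2) with (b*b).
    + apply sqrt_square; lra.
    + replace ((sqrt (b*b-p*p) - 0)^2) with (sqrt (b*b-p*p) * sqrt (b*b-p*p)) by ring.
      rewrite Hs. ring.
  - reflexivity.
  - rewrite Hs. ring.
Qed.

Lemma CN X d : complete_CAT0 X d -> forall x y z g, geodesic X d g x y -> 0 < d x y ->
  forall s, 0 <= s <= d x y ->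
  (d (g s) z)^2 <= (1 - s / d x y)*(d x z)^2 + (s / d x y)*(d y z)^2
                  - (s / d x y)*(1 - s / d x y)*(d x y)^2.
Proof.
  intros [[Hnn [Hz [Hsym Htri]]] [Hgeo [Hcat _]]] x y z g Hg Hc s Hs.
  destruct (Hgeo y z) as [g2 Hg2]. destruct (Hgeo z x) as [g3 Hg3].
  set (c := d x y) in *. set (a := d y z) in *. set (b := d z x) in *.
  assert (Ha : 0 <= a) by apply Hnn. assert (Hb : 0 <= b) by apply Hnn.
  assert (T1 : a <= b + c).
  { unfold a, b, c. pose proof (Htri y x z). pose proof (Hsym y x). pose proof (Hsym x z). lra. }
  assert (T2 : b <= a + c).
  { unfold a, b, c. pose proof (Htri z y x). pose proof (Hsym z y). pose proof (Hsym y x). lra. }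
  assert (T3 : c <= a + b).
  { unfold a, b, c. pose proof (Htri x z y). pose proof (Hsym x z). pose proof (Hsym z y). lra. }
  destruct (tri_exists a b c Hc Ha Hb T1 T2 T3) as [p [q [E1 [E2 [Ep Epq]]]]].
  assert (E0 : euclid (0,0) (c,0) = c).
  { unfold euclid; cbn [fst snd]. replace ((0 - c)^2 + (0-0)^2) with (c*c) by ring. apply sqrt_square; lra. }
  pose proof (Hcat x y z g g2 g3 Hg Hg2 Hg3 (0,0) (c,0) (p,q) E0 E1 E2) as HC.
  simpl in HC.
  specialize (HC (g, c, (0,0), (c,0)) (g3, b, (p,q), (0,0))
     ltac:(left; reflexivity) ltac:(right; right; left; reflexivity)).
  simpl in HC.
  specialize (HC s 0 Hs ltac:(lra)).
  destruct Hg3 as [Hg30 _]. rewrite Hg30 in HC.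
  unfold euclid, lerp in HC; cbn [fst snd] in HC.
  replace (0 / b) with 0 in HC by (unfold Rdiv; ring).
  set (l := s / c) in *.
  set (E := (0 + l * (c - 0) - (p + 0 * (0 - p))) ^ 2 + (0 + l * (0 - 0) - (q + 0 * (0 - q))) ^ 2) in HC.
  assert (HE : 0 <= E) by (unfold E; apply Rplus_le_le_0_compat; apply pow2_ge_0).
  assert (Hd : 0 <= d (g s) z) by apply Hnn.
  assert (Hsq : (d (g s) z)^2 <= E).
  { rewrite <- (sqrt_sqrt E HE). replace ((d (g s) z)^2) with (d (g s) z * d (g s) z) by ring.
    apply Rmult_le_compat; lra. }
  rewrite (Hsym x z). fold b.
  assert (Hp : 2*c*p = c*c + b*b - a*a) by (rewrite Ep; field; lra).
  replace E with (l*l*c*c - l*(2*c*p) + (p*p+q*q)) in Hsq by (unfold E; ring).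
  rewrite Hp, Epq in Hsq. nra.
Qed.

Lemma pyth X d : complete_CAT0 X d -> forall (C : X -> Prop) x p, convex X d C -> C p ->
  (forall c, C c -> d x p <= d x c) -> forall c, C c -> (d x p)^2 + (d p c)^2 <= (d x c)^2.
Proof.
  intros HX C x p Hconv Hp Hmin c Hc.
  pose proof HX as [[Hnn [Hz [Hsym Htri]]] [Hgeo [Hcat _]]].
  assert (Hxp := Hnn x p). assert (Hxc := Hnn x c).
  destruct (Rle_lt_or_eq_dec 0 (d p c) (Hnn p c)) as [HD|HD].
  2:{ rewrite <- HD. pose proof (Hmin c Hc). nra. }
  set (D := d p c) in *.
  apply Rnot_lt_le. intro Hneg.
  set (e := (d x p)^2 + D^2 - (d x c)^2).
  assert (He : 0 < e) by (unfold e; lra).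
  assert (HD2 : 0 < D^2) by nra.
  set (l := Rmin 1 (e/(2*D^2))).
  assert (Hl0 : 0 < l) by (unfold l; apply Rmin_glb_lt; [lra| apply Rdiv_lt_0_compat; lra]).
  assert (Hl1 : l <= 1) by (unfold l; apply Rmin_l).
  assert (Hl2 : l <= e/(2*D^2)) by (unfold l; apply Rmin_r).
  destruct (Hgeo p c) as [g Hg].
  assert (Hs : 0 <= l*D <= d p c) by (fold D; split; nra).
  pose proof (CN X d HX p c x g Hg HD (l*D) Hs) as Hcn.
  fold D in Hcn.
  replace (l*D/D) with l in Hcn by (field; lra).
  pose proof (Hmin (g (l*D)) (Hconv p c g Hp Hc Hg (l*D) Hs)) as Hm.
  rewrite (Hsym (g (l*D)) x) in Hcn. rewrite (Hsym p x), (Hsym c x) in Hcn.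
  assert (Hsq : (d x p)^2 <= (d x (g (l*D)))^2) by nra.
  assert (Hk : l * ((d x p)^2 - (d x c)^2 + (1-l)*D^2) <= 0) by nra.
  assert (Hk2 : (d x p)^2 - (d x c)^2 + (1-l)*D^2 <= 0).
  { apply Rnot_lt_le; intro Hq. assert (0 < l * ((d x p)^2 - (d x c)^2 + (1-l)*D^2)) by (apply Rmult_lt_0_compat; lra). lra. }
  assert (Hl3 : l * D^2 <= e/2).
  { apply Rmult_le_compat_r with (r := D^2) in Hl2; [|lra].
    replace (e / (2 * D ^ 2) * D ^ 2) with (e/2) in Hl2 by (field; lra). exact Hl2. }
  unfold e in *. lra.
Qed.

Lemma mid_bound X d : complete_CAT0 X d -> forall (C : X -> Prop) x dl,
  convex X d C -> (forall c, C c -> dl <= d x c) -> 0 <= dl ->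
  forall a b, C a -> C b -> (d a b)^2 <= 2*(d x a)^2 + 2*(d x b)^2 - 4*dl^2.
Proof.
  intros HX C x dl Hconv Hmin Hdl a b Ha Hb.
  pose proof HX as [[Hnn [Hz [Hsym Htri]]] [Hgeo [Hcat _]]].
  pose proof (Hmin a Ha). pose proof (Hmin b Hb).
  destruct (Rle_lt_or_eq_dec 0 (d a b) (Hnn a b)) as [HD|HD].
  2:{ rewrite <- HD. nra. }
  destruct (Hgeo a b) as [g Hg].
  assert (Hs : 0 <= d a b / 2 <= d a b) by lra.
  pose proof (CN X d HX a b x g Hg HD _ Hs) as Hcn.
  replace (d a b / 2 / d a b) with (/2) in Hcn by (field; lra).
  pose proof (Hmin _ (Hconv a b g Ha Hb Hg _ Hs)) as Hm.
  rewrite (Hsym (g (d a b / 2)) x), (Hsym a x), (Hsym b x) in Hcn.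
  nra.
Qed.

Lemma proj_exists X d : complete_CAT0 X d -> forall C, nonempty X C -> closed X d C ->
  convex X d C -> forall x, exists p, C p /\ forall c, C c -> d x p <= d x c.
Proof.
  intros HX C [c0 Hc0] Hcl Hconv x.
  pose proof HX as [[Hnn [Hz [Hsym Htri]]] [Hgeo [Hcat Hcomp]]].
  set (E := fun r => exists c, C c /\ r = - d x c).
  assert (HEb : bound E) by (exists 0; intros r [c [_ ->]]; pose proof (Hnn x c); lra).
  assert (HEn : exists r, E r) by (exists (- d x c0); exists c0; auto).
  destruct (completeness E HEb HEn) as [m [Hub Hlub]].
  set (dl := - m).
  assert (Hlow : forall c, C c -> dl <= d x c).
  { intros c Hc. assert (E (- d x c)) by (exists c; auto). pose proof (Hub _ H). unfold dl; lra. }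
  assert (Hdl : 0 <= dl).
  { assert (m <= 0). { apply Hlub. intros r [c [_ ->]]. pose proof (Hnn x c). lra. } unfold dl; lra. }
  assert (Happ : forall eps, 0 < eps -> exists c, C c /\ d x c < dl + eps).
  { intros eps Heps. apply NNPP. intro Hn.
    assert (m <= m - eps).
    { apply Hlub. intros r [c [Hc ->]].
      apply Rnot_lt_le. intro. apply Hn. exists c. split; auto. unfold dl; lra. }
    lra. }
  set (P := fun n c => C c /\ d x c < dl + / (INR n + 1)).
  set (u := fun n => epsilon (inhabits x) (P n)).
  assert (Hu : forall n, P n (u n)).
  { intro n. apply epsilon_spec. apply Happ. apply Rinv_0_lt_compat.
    pose proof (pos_INR n). lra. }
  assert (HuN : forall N n, (N <= n)%nat -> (0 < N)%nat -> / (INR n + 1) <= / INR N).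
  { intros N n HNn HN. apply Rinv_le_contravar. apply lt_0_INR; auto.
    apply le_INR in HNn. lra. }
  assert (Hcau : forall eps, 0 < eps -> exists N, forall m n, (N <= m)%nat -> (N <= n)%nat ->
        d (u m) (u n) < eps).
  { intros eps Heps.
    assert (Hq : 0 < eps^2 / (4*(2*dl+1))) by (apply Rdiv_lt_0_compat; nra).
    destruct (archimed_cor1 _ Hq) as [N [HN HN0]].
    exists N. intros m' n' Hm Hn.
    destruct (Hu m') as [Cm Dm]. destruct (Hu n') as [Cn Dn].
    pose proof (mid_bound X d HX C x dl Hconv Hlow Hdl _ _ Cm Cn) as Hb.
    pose proof (HuN N m' Hm HN0). pose proof (HuN N n' Hn HN0).
    set (w := / INR N) in *.
    assert (Hw : 0 < w) by (unfold w; apply Rinv_0_lt_compat; apply lt_0_INR; auto).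
    assert (Hw1 : w <= 1).
    { unfold w. rewrite <- Rinv_1. apply Rinv_le_contravar. lra.
      replace 1 with (INR 1) by reflexivity. apply le_INR. lia. }
    assert (Hxm := Hnn x (u m')). assert (Hxn := Hnn x (u n')).
    assert (Hdd := Hnn (u m') (u n')).
    assert (Hm2 : (d x (u m'))^2 <= (dl + w)^2) by nra.
    assert (Hn2 : (d x (u n'))^2 <= (dl + w)^2) by nra.
    assert (Hsmall : w * (4*(2*dl+1)) < eps^2).
    { apply Rmult_lt_compat_r with (r := 4*(2*dl+1)) in HN; [|lra].
      replace (eps ^ 2 / (4 * (2 * dl + 1)) * (4 * (2 * dl + 1))) with (eps^2) in HN by (field; lra).
      exact HN. }
    assert (Hfin : (d (u m') (u n'))^2 < eps^2) by nra.
    nra. }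
  destruct (Hcomp u Hcau) as [l Hl].
  exists l. split.
  { apply (Hcl u l). intro n; apply (Hu n). exact Hl. }
  intros c Hc. apply Rle_trans with dl; [|apply Hlow; auto].
  apply Rnot_lt_le. intro Hlt.
  set (e := d x l - dl).
  assert (He : 0 < e/2) by (unfold e; lra).
  destruct (Hl _ He) as [N1 HN1].
  destruct (archimed_cor1 _ He) as [N2 [HN2 HN20]].
  pose proof (HN1 (N1+N2)%nat ltac:(lia)) as H1.
  pose proof (HuN N2 (N1+N2)%nat ltac:(lia) HN20) as H2.
  destruct (Hu (N1+N2)%nat) as [_ H3].
  pose proof (Htri x (u (N1+N2)%nat) l).
  unfold e in *. lra.
Qed.

Lemma proj_spec X d : complete_CAT0 X d -> forall C, nonempty X C -> closed X d C ->
  convex X d C -> forall x, C (proj X d C x) /\ forall c, C c -> d x (proj X d C x) <= d x c.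
Proof.
  intros HX C H1 H2 H3 x. unfold proj. apply epsilon_spec. apply proj_exists; auto.
Qed.

Lemma key X d : complete_CAT0 X d -> forall (A B : X -> Prop) x y p q,
  convex X d A -> convex X d B -> A x -> B y ->
  B p -> (forall c, B c -> d x p <= d x c) ->
  A q -> (forall c, A c -> d y q <= d y c) -> d p q <= d x y.
Proof.
  intros HX A B x y p q HcA HcB Ax By Bp Hp Aq Hq.
  pose proof HX as [[Hnn [Hz [Hsym Htri]]] [Hgeo [Hcat _]]].
  pose proof (pyth X d HX B x p HcB Bp Hp y By) as P1.
  pose proof (pyth X d HX A y q HcA Aq Hq x Ax) as P2.
  rewrite (Hsym y x) in P2.
  assert (a1 := Hnn x p). assert (a2 := Hnn p y). assert (a3 := Hnn y q). assert (a4 := Hnn q x).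
  assert (a5 := Hnn p q).
  destruct (Rle_lt_or_eq_dec 0 (d x y) (Hnn x y)) as [HD|HD].
  2:{ rewrite <- HD in P1, P2 |- *.
      assert (d x p = 0) by nra. assert (d q x = 0) by nra.
      pose proof (Htri p x q). rewrite (Hsym p x) in H1. rewrite (Hsym x q) in H1. lra. }
  destruct (Hgeo x y) as [g Hg].
  assert (Hs : 0 <= d x y / 2 <= d x y) by lra.
  pose proof (CN X d HX x y p g Hg HD _ Hs) as C1.
  pose proof (CN X d HX x y q g Hg HD _ Hs) as C2.
  replace (d x y / 2 / d x y) with (/2) in C1, C2 by (field; lra).
  set (m := g (d x y / 2)) in *.
  rewrite (Hsym y p) in C1. rewrite (Hsym x q) in C2.
  assert (b1 := Hnn m p). assert (b2 := Hnn m q).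
  assert (E1 : d m p <= d x y / 2) by nra.
  assert (E2 : d m q <= d x y / 2) by nra.
  pose proof (Htri p m q). rewrite (Hsym p m) in H. lra.
Qed.

Theorem mainTheorem9 (X : Type) (d : X -> X -> R) (A B : X -> Prop) :
  complete_CAT0 X d ->
  nonempty X A -> closed X d A -> convex X d A ->
  nonempty X B -> closed X d B -> convex X d B ->
  cyclic_map X A B (cycP X d A B) /\ rel_nonexpansive X d A B (cycP X d A B).
Proof.
  intros HX nA clA cvA nB clB cvB.
  pose proof HX as [[Hnn [Hz [Hsym Htri]]] _].
  assert (Hself : forall (C : X -> Prop) x p, C x -> (forall c, C c -> d x p <= d x c) -> p = x).
  { intros C x p Cx Hm. pose proof (Hm x Cx). assert (d x x = 0) by (apply Hz; auto).
    pose proof (Hnn x p). apply Hz. rewrite Hsym. lra. }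
  pose proof (proj_spec X d HX A nA clA cvA) as PA.
  pose proof (proj_spec X d HX B nB clB cvB) as PB.
  split; [split|].
  - intros x Ax. unfold cycP. destruct (excluded_middle_informative (A x)); [|contradiction].
    apply PB.
  - intros x Bx. unfold cycP. destruct (excluded_middle_informative (A x)) as [Ax|nAx].
    + destruct (PB x) as [_ Hm]. rewrite (Hself B x _ Bx Hm). exact Ax.
    + apply PA.
  - intros x y Ax By. unfold cycP.
    destruct (excluded_middle_informative (A x)) as [_|]; [|contradiction].
    destruct (PB x) as [Bp Hp].
    destruct (excluded_middle_informative (A y)) as [Ay|nAy].
    + destruct (PB y) as [_ Hm]. rewrite (Hself B y _ By Hm).
      apply (key X d HX A B x y _ y cvA cvB Ax By Bp Hp Ay).
      intros c _. assert (d y y = 0) by (apply Hz; auto). rewrite H. apply Hnn.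
    + destruct (PA y) as [Aq Hq].
      exact (key X d HX A B x y _ _ cvA cvB Ax By Bp Hp Aq Hq).
Qed.
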